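(* Let $A,B\in\mathbb{Z}$ with $4A^3+27B^2\ne0$, let $M$ be a positive integer with $\max\{10\sqrt{|A|},5\sqrt[3]{|B|}\}\le M$, let $D$ be a squarefree positive integer and $E_D: y^2=x^3+D^2Ax+D^3B$. Let $P,Q\in E_D(\mathbb{Q})$ with $MD\le x(P)<x(Q)$ and $y(P)y(Q)>0$. Then \[0.19\,x(P)\le x(P+Q)\le 2\,x(P).\] *)

(* Defs.v *)
From mathcomp Require Import all_boot all_order all_algebra.
Set Implicit Arguments. Unset Strict Implicit. Unset Printing Implicit Defensive.
Import Order.TTheory GRing.Theory Num.Theory.
Local Open Scope ring_scope.

Inductive ecpoint := EInf | EAff of rat & rat.

Definition on_curve (a b : rat) (P : ecpoint) : bool :=
  match P with
  | EInf => true
  | EAff x y => y ^+ 2 == x ^+ 3 + a * x + b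
  end.

Definition ecadd (a : rat) (P Q : ecpoint) : ecpoint :=
  match P, Q with
  | EInf, _ => Q
  | _, EInf => P
  | EAff x1 y1, EAff x2 y2 =>
      if x1 == x2 then
        if y1 == - y2 then EInf
        else let l := (3%:R * x1 ^+ 2 + a) / (2%:R * y1) in
             let x3 := l ^+ 2 - 2%:R * x1 in
             EAff x3 (l * (x1 - x3) - y1)
      else let l := (y2 - y1) / (x2 - x1) in
           let x3 := l ^+ 2 - x1 - x2 in
           EAff x3 (l * (x1 - x3) - y1)
  end.

Definition squarefree (n : nat) : bool :=
  [forall p : 'I_n.+1, prime p ==> ~~ (p * p %| n)%N].

(* Main.v *)
Require Import Defs.
From mathcomp Require Import all_boot all_order all_algebra.
From mathcomp Require Import ring lra.
Import Order.TTheory GRing.Theory Num.Theory.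
Local Open Scope ring_scope.

Lemma s_up (t al be : rat) : 1 <= t -> -1/100 <= al -> al <= 1/100 ->
  -1/125 <= be -> be <= 1/125 ->
  0 < (t+al)*(1+t) + 2*be - 2*(t-1)^+2 ->
  (t-al)^+2 - 4*be*(1+t) - 2*2*((t+al)*(1+t)+2*be) + 2^+2*(t-1)^+2 <= 0.
Proof.
move=> h1 h2 h3 h4 h5 h6.
have h7: 0 <= (7+5*al+4*be)*(t-1) by apply: mulr_ge0; lra.
have h8: al^+2 <= 1/10000 by nra.
nra.
Qed.

Lemma s_lo1 (t al be : rat) : 1 <= t -> -1/100 <= al -> al <= 1/100 ->
  -1/125 <= be -> be <= 1/125 ->
  0 <= (t+al)*(1+t) + 2*be - 19/100*(t-1)^+2.
Proof.
move=> h1 h2 h3 h4 h5.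
have h7: 0 <= (t-1)*(t-1) by nra.
have h8: 0 <= (t-1)*(3 + al) by apply: mulr_ge0; lra.
nra.
Qed.

Lemma s_lo2 (t al be : rat) : 1 <= t -> -1/100 <= al -> al <= 1/100 ->
  -1/125 <= be -> be <= 1/125 ->
  0 <= (t-al)^+2 - 4*be*(1+t) - 2*(19/100)*((t+al)*(1+t)+2*be) + (19/100)^+2*(t-1)^+2.
Proof.
move=> h1 h2 h3 h4 h5.
have h7: 0 <= (t-1)*(t-1) by nra.
have h8: 0 <= (t-1)*(1 - 2*(al + 2*be + 19/100 + 19/100*al + (19/100)^+2)) by apply: mulr_ge0; lra.
have h9: 0 <= al^+2 by nra.
nra.
Qed.

Lemma sq_le (u v : rat) : 0 <= v -> u ^+ 2 <= v ^+ 2 -> u <= v.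
Proof.
move=> hv h.
have [hu|hu] := lerP u v; first by [].
have : v ^+ 2 < u ^+ 2.
  rewrite !expr2; apply: (le_lt_trans (y := v * u)).
    exact: (ler_wpM2l hv (ltW hu)).
  rewrite (ltr_pM2r (le_lt_trans hv hu)); exact: hu.
by rewrite ltNge h.
Qed.

Lemma key (x1 x2 y1 y2 a b : rat) :
  0 < x1 -> x1 < x2 -> 0 < y1 * y2 ->
  y1 ^+ 2 = x1 ^+ 3 + a * x1 + b -> y2 ^+ 2 = x2 ^+ 3 + a * x2 + b ->
  - x1 ^+ 2 <= 100 * a -> 100 * a <= x1 ^+ 2 ->
  - x1 ^+ 3 <= 125 * b -> 125 * b <= x1 ^+ 3 ->
  (19%:R / 100%:R) * x1 <= ((y2 - y1) / (x2 - x1)) ^+ 2 - x1 - x2 /\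
  ((y2 - y1) / (x2 - x1)) ^+ 2 - x1 - x2 <= 2%:R * x1.
Proof.
move=> x1p x12 Pp hy1 hy2 ha1 ha2 hb1 hb2.
set d := x2 - x1. set P := y1 * y2.
set N := (x1*x2+a)*(x1+x2) + 2*b.
set G := (x1*x2 - a)^+2 - 4*b*(x1+x2).
have dp : 0 < d by rewrite /d subr_gt0.
have d0 : d != 0 by rewrite gt_eqF.
have x10 : x1 != 0 by rewrite gt_eqF.
have hx3 : ((y2 - y1) / d) ^+ 2 - x1 - x2 = (N - 2 * P) / d ^+ 2.
  have e : (y2 - y1) ^+ 2 = y1^+2 + y2^+2 - 2 * P by rewrite /P; ring.
  rewrite expr_div_n e hy1 hy2 /N /d; field.
  exact: d0.
have hNP : N ^+ 2 - 4 * P ^+ 2 = d ^+ 2 * G.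
  rewrite /P exprMn hy1 hy2 /N /G /d; ring.
pose t := x2 / x1. pose al := a / x1 ^+ 2. pose be := b / x1 ^+ 3.
have ex2 : x2 = t * x1 by rewrite /t; field.
have ea : a = al * x1 ^+ 2 by rewrite /al; field.
have eb : b = be * x1 ^+ 3 by rewrite /be; field.
have x1p2 : 0 < x1 ^+ 2 by apply: exprn_gt0.
have x1p3 : 0 < x1 ^+ 3 by apply: exprn_gt0.
have t1 : 1 <= t.
  rewrite /t (ler_pdivlMr _ _ x1p) mul1r; exact: ltW.
have al1 : -1/100 <= al.
  rewrite /al (ler_pdivlMr _ _ x1p2); clear -ha1; lra.
have al2 : al <= 1/100.
  rewrite /al (ler_pdivrMr _ _ x1p2); clear -ha2; lra.
have be1 : -1/125 <= be.
  rewrite /be (ler_pdivlMr _ _ x1p3); clear -hb1; lra.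
have be2 : be <= 1/125.
  rewrite /be (ler_pdivrMr _ _ x1p3); clear -hb2; lra.
clearbody t al be.
have eN : N = x1 ^+ 3 * ((t+al)*(1+t) + 2*be) by rewrite /N ex2 ea eb; ring.
have ed : d = x1 * (t - 1) by rewrite /d ex2; ring.
have eG : G = x1 ^+ 4 * ((t-al)^+2 - 4*be*(1+t)) by rewrite /G ex2 ea eb; ring.
have Pp' : 0 < P := Pp.
clearbody d P N G.
have d2p : 0 < d ^+ 2 by apply: exprn_gt0.
rewrite -/d hx3; split.
- rewrite (ler_pdivlMr _ _ d2p).
  set c := 19%:R / 100%:R : rat.
  have ec : c = 19%:R / 100%:R by [].
  clearbody c.
  have hw : 0 <= N - c * x1 * d ^+ 2.
    have h := s_lo1 _ _ _ t1 al1 al2 be1 be2.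
    have hp := mulr_ge0 (ltW x1p3) h.
    have e : N - c * x1 * d ^+ 2 = x1^+3 * ((t+al)*(1+t) + 2*be - 19/100*(t-1)^+2).
      by rewrite eN ed ec; ring.
    rewrite e; exact hp.
  have hH : 0 <= G - 2 * c * x1 * N + c ^+ 2 * x1 ^+ 2 * d ^+ 2.
    have h := s_lo2 _ _ _ t1 al1 al2 be1 be2.
    have hp := mulr_ge0 (ltW (exprn_gt0 4 x1p)) h.
    have e : G - 2 * c * x1 * N + c ^+ 2 * x1 ^+ 2 * d ^+ 2 =
      x1 ^+ 4 * ((t-al)^+2 - 4*be*(1+t) - 2*(19/100)*((t+al)*(1+t)+2*be) + (19/100)^+2*(t-1)^+2).
      by rewrite eG eN ed ec; ring.
    rewrite e; exact hp.
  have hsq : (2 * P) ^+ 2 <= (N - c * x1 * d ^+ 2) ^+ 2.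
    have e : (N - c * x1 * d ^+ 2) ^+ 2 = (2 * P) ^+ 2 + d ^+ 2 * (G - 2 * c * x1 * N + c ^+ 2 * x1 ^+ 2 * d ^+ 2).
      have e2 : (2 * P) ^+ 2 = N ^+ 2 - d ^+ 2 * G by rewrite -hNP; ring.
      rewrite e2; ring.
    rewrite e lerDl; exact: mulr_ge0 (ltW d2p) hH.
  have : 2 * P <= N - c * x1 * d ^+ 2.
    exact: sq_le hw hsq.
  move=> h; clear -h; lra.
- rewrite (ler_pdivrMr _ _ d2p).
  have [hn|hp] := lerP (N - 2 * x1 * d ^+ 2) 0.
    clear -hn Pp'; lra.
  have hH : G - 2 * 2 * x1 * N + 2 ^+ 2 * x1 ^+ 2 * d ^+ 2 <= 0.
    have e1 : N - 2 * x1 * d ^+ 2 = x1 ^+ 3 * ((t+al)*(1+t) + 2*be - 2*(t-1)^+2).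
      by rewrite eN ed; ring.
    move: hp; rewrite e1 (pmulr_rgt0 _ x1p3) => hp'.
    have h := s_up _ _ _ t1 al1 al2 be1 be2 hp'.
    have e : G - 2 * 2 * x1 * N + 2 ^+ 2 * x1 ^+ 2 * d ^+ 2 =
      x1 ^+ 4 * ((t-al)^+2 - 4*be*(1+t) - 2*2*((t+al)*(1+t)+2*be) + 2^+2*(t-1)^+2).
      by rewrite eG eN ed; ring.
    rewrite e (pmulr_rle0 _ (exprn_gt0 4 x1p)); exact h.
  have hsq : (N - 2 * x1 * d ^+ 2) ^+ 2 <= (2 * P) ^+ 2.
    have e : (N - 2 * x1 * d ^+ 2) ^+ 2 = (2 * P) ^+ 2 + d ^+ 2 * (G - 2 * 2 * x1 * N + 2 ^+ 2 * x1 ^+ 2 * d ^+ 2).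
      have e2 : (2 * P) ^+ 2 = N ^+ 2 - d ^+ 2 * G by rewrite -hNP; ring.
      rewrite e2; ring.
    rewrite e gerDl (pmulr_rle0 _ d2p); exact hH.
  have : N - 2 * x1 * d ^+ 2 <= 2 * P.
    apply: sq_le hsq; apply: mulr_ge0; [exact: ler0n | exact: ltW Pp'].
  move=> h; clear -h; lra.
Qed.

Theorem lemma3p6 (A B : int) (M D : nat) (xP yP xQ yQ : rat) :
  4%:~R * A ^+ 3 + 27%:~R * B ^+ 2 != 0 :> int ->
  (0 < M)%N ->
  (* max(10 sqrt|A|, 5 cbrt|B|) <= M, for M >= 0 *)
  100%:~R * `|A| <= (M%:R) ^+ 2 :> int ->
  125%:~R * `|B| <= (M%:R) ^+ 3 :> int ->
  (0 < D)%N -> squarefree D ->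
  let a : rat := (D%:R) ^+ 2 * A%:~R in
  let b : rat := (D%:R) ^+ 3 * B%:~R in
  on_curve a b (EAff xP yP) -> on_curve a b (EAff xQ yQ) ->
  (M * D)%:R <= xP -> xP < xQ -> 0 < yP * yQ ->
  exists x3 y3 : rat,
    ecadd a (EAff xP yP) (EAff xQ yQ) = EAff x3 y3 /\
    (19%:R / 100%:R) * xP <= x3 /\ x3 <= 2%:R * xP.
Proof.
move=> _ M0 hA hB D0 _ a b /eqP hP /eqP hQ hm hPQ hy.
rewrite /ecadd (lt_eqF hPQ).
set l := (yQ - yP) / (xQ - xP).
exists (l ^+ 2 - xP - xQ), (l * (xP - (l ^+ 2 - xP - xQ)) - yP).
split; first reflexivity.
rewrite -(ler_int rat) rmorphM rmorphXn /= intr_norm !rmorph_nat in hA.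
rewrite -(ler_int rat) rmorphM rmorphXn /= intr_norm !rmorph_nat in hB.
have m0 : 0 < (M * D)%:R :> rat by rewrite ltr0n muln_gt0 M0 D0.
have xp : 0 < xP := lt_le_trans m0 hm.
have m0' : 0 <= (M * D)%:R :> rat := ltW m0.
have Dp : 0 <= D%:R :> rat := ler0n _ _.
have hm2 : (M * D)%:R ^+ 2 <= xP ^+ 2 :> rat.
  rewrite !expr2; exact (ler_pM m0' m0' hm hm).
have hm3 : (M * D)%:R ^+ 3 <= xP ^+ 3 :> rat.
  have := ler_pM m0' (exprn_ge0 2 m0') hm hm2; by rewrite -!exprS.
have ha : `|100 * a| <= xP ^+ 2.
  apply: le_trans hm2.
  rewrite /a normrM normrM (ger0_norm (exprn_ge0 2 Dp)) (ger0_norm (ler0n _ 100)) natrM exprMn.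
  rewrite mulrCA mulrC; apply: ler_wpM2r; first exact: exprn_ge0.
  exact: hA.
have hb : `|125 * b| <= xP ^+ 3.
  apply: le_trans hm3.
  rewrite /b normrM normrM (ger0_norm (exprn_ge0 3 Dp)) (ger0_norm (ler0n _ 125)) natrM exprMn.
  rewrite mulrCA mulrC; apply: ler_wpM2r; first exact: exprn_ge0.
  exact: hB.
have /andP[ha1 ha2] : - xP ^+ 2 <= 100 * a <= xP ^+ 2 by rewrite -ler_norml.
have /andP[hb1 hb2] : - xP ^+ 3 <= 125 * b <= xP ^+ 3 by rewrite -ler_norml.
clear ha hb hm2 hm3 hA hB.
have [h1 h2] := key _ _ _ _ _ _ xp hPQ hy hP hQ ha1 ha2 hb1 hb2.
rewrite /l; split; [exact h1 | exact h2].
Qed.
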